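(* Consider the following heterogeneous treatment effects model. Let $Y$ be a real-valued outcome (with finite mean), $D\in\{0,1\}$ a binary treatment, and $Z\in\{0,1\}$, $W\in\{0,1\}$ two binary instruments. For $z\in\{0,1\}$, let $D_z\in\{0,1\}$ denote the potential treatment when $Z=z$, and for $d,z\in\{0,1\}$ let $Y_{d,z}$ denote the potential outcome when the instrument is $Z=z$ and the treatment is $d$ (potential outcomes are not indexed by $W$). The observed variables $(Y,D,Z,W)$ are generated by $D=D_1Z+D_0(1-Z)$ and $Y=Y_1D+Y_0(1-D)$, where $Y_d=Y_{d,1}Z+Y_{d,0}(1-Z)$. Define the subgroups always takers $\mathrm{AT}=\{D_1=D_0=1\}$, never takers $\mathrm{NT}=\{D_1=D_0=0\}$ and compliers $\mathrm{CP}=\{D_1=1,D_0=0\}$, and for $G\in\{\mathrm{AT},\mathrm{NT},\mathrm{CP}\}$ and $d\in\{0,1\}$ let $\rho_{G,d}=E[Y_{d,1}-Y_{d,0}\mid G]$. Assume: (i) there exist constants $\rho_1,\rho_0$ such that $\rho_{G,d}=\rho_d$ for all $G\in\{\mathrm{AT},\mathrm{NT},\mathrm{CP}\}$ and $d\in\{0,1\}$; (ii) $D_1\geq D_0$; (iii) $(Z,W)$ is independent of $Y_{d,z}$ conditional on $(D_1,D_0)$ for every $d,z\in\{0,1\}$, and $Z$ is independent of $(D_1,D_0)$ conditional on $W$; (iv) $\Pr(D_1>D_0)>0$; (v) $0<\Pr(Z=z,W=w)<1$ for all $z,w\in\{0,1\}$; (vi) for each $G\in\{\mathrm{AT},\mathrm{NT}\}$,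 $\Pr(G\mid W=1)\Pr(\mathrm{CP}\mid W=0)\neq \Pr(G\mid W=0)\Pr(\mathrm{CP}\mid W=1)$. Then the direct effects $(\rho_1,\rho_0)$ and the local average treatment effect $\mathrm{LATE}=E[Y_1-Y_0\mid \mathrm{CP}]$ are point identified, i.e., they are uniquely determined by the joint distribution of the observed variables $(Y,D,Z,W)$.
   Context: $\Pr(G\mid W=w)$ denotes the probability that $(D_1,D_0)$ belongs to subgroup $G$ conditional on $W=w$. ''Point identified'' means that any two data-generating structures satisfying all the stated assumptions and inducing the same joint distribution of $(Y,D,Z,W)$ yield the same values of $\rho_1$, $\rho_0$ and $\mathrm{LATE}$. *)

(* Defs.v *)
From mathcomp Require Import all_boot all_order all_algebra.
From mathcomp Require Import all_classical all_reals all_analysis.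
Set Implicit Arguments. Unset Strict Implicit. Unset Printing Implicit Defensive.
Import Order.TTheory GRing.Theory Num.Theory.
Local Open Scope classical_set_scope.
Local Open Scope ring_scope.

(* Potential outcomes  Y d z = Y_{d,z},  potential treatments
   D z = D_z (D true = D_1, D false = D_0), instruments Z, W : Omega -> bool
   (true = 1, false = 0). *)

Section HTE.
Context {R : realType} {dsp : measure_display} {T : measurableType dsp}.
Variable P : probability T R.

Definition prb (A : set T) : R := fine (P A).

Definition cexp (A : set T) (X : T -> R) : R := Rintegral P A X / prb A.

Variable D : bool -> T -> bool.

Definition ATs : set T := [set w | D true w = true /\ D false w = true].
Definition NTs : set T := [set w | D true w = false /\ D false w = false].
Definition CPs : set T := [set w | D true w = true /\ D false w = false].
Definition typ (c1 c0 : bool) : set T :=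
  [set w | D true w = c1 /\ D false w = c0].

Variables (Y : bool -> bool -> T -> R) (Z W : T -> bool).

Definition Dobs (w : T) : bool := if Z w then D true w else D false w.
Definition Ypot (d : bool) (w : T) : R := Y d (Z w) w.
Definition Yobs (w : T) : R := Ypot (Dobs w) w.

Definition rhoG (G : set T) (d : bool) : R :=
  cexp G (fun w => Y d true w - Y d false w).

Definition LATE : R := cexp CPs (fun w => Ypot true w - Ypot false w).

Definition ev (f : T -> bool) (b : bool) : set T := [set w | f w = b].

Definition prW (G : set T) (w : bool) : R := prb (G `&` ev W w) / prb (ev W w).

Definition hte_assumptions (rho1 rho0 : R) : Prop :=
  (forall d z, measurable_fun setT (Y d z)) /\
  (forall z b, measurable (ev (D z) b)) /\
  (forall b, measurable (ev Z b)) /\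
  (forall b, measurable (ev W b)) /\
  (forall d z, P.-integrable setT (fun w => (Y d z w)%:E)) /\
  (forall d, rhoG ATs d = (if d then rho1 else rho0)) /\
  (forall d, rhoG NTs d = (if d then rho1 else rho0)) /\
  (forall d, rhoG CPs d = (if d then rho1 else rho0)) /\
  (forall w, D false w ==> D true w) /\
  (* (iii-a) (Z,W) independent of Y_{d,z} conditionally on (D_1, D_0) *)
  (forall d z (B : set R), measurable B -> forall z' w' c1 c0,
     prb (ev Z z' `&` ev W w' `&` (Y d z @^-1` B) `&` typ c1 c0)
       * prb (typ c1 c0)
     = prb (ev Z z' `&` ev W w' `&` typ c1 c0)
       * prb ((Y d z @^-1` B) `&` typ c1 c0)) /\
  (* (iii-b) Z independent of (D_1, D_0) conditionally on W *)
  (forall z c1 c0 w',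
     prb (ev Z z `&` typ c1 c0 `&` ev W w') * prb (ev W w')
     = prb (ev Z z `&` ev W w') * prb (typ c1 c0 `&` ev W w')) /\
  (0 < prb CPs) /\
  (forall z w', 0 < prb (ev Z z `&` ev W w') < 1) /\
  (prW ATs true * prW CPs false != prW ATs false * prW CPs true) /\
  (prW NTs true * prW CPs false != prW NTs false * prW CPs true).

End HTE.

(* Equality of the joint distributions of the observed (Y, D, Z, W) of two
   structures: agreement on the generating pi-system {Y in B, D=d, Z=z, W=w}
   of the product sigma-algebra on R x bool x bool x bool. *)
Definition same_obs_law {R : realType}
  {d1 : measure_display} {T1 : measurableType d1} (P1 : probability T1 R)
  (Y1 : T1 -> R) (D1 Z1 W1 : T1 -> bool)
  {d2 : measure_display} {T2 : measurableType d2} (P2 : probability T2 R)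
  (Y2 : T2 -> R) (D2 Z2 W2 : T2 -> bool) : Prop :=
  forall (B : set R), measurable B -> forall d z w,
    P1 [set t | B (Y1 t) /\ D1 t = d /\ Z1 t = z /\ W1 t = w]
    = P2 [set t | B (Y2 t) /\ D2 t = d /\ Z2 t = z /\ W2 t = w].

(* Main.v *)
Require Import Defs.
From mathcomp Require Import all_boot all_order all_algebra.
From mathcomp Require Import all_classical all_reals all_analysis.
From mathcomp Require Import measurable_realfun.
From mathcomp Require Import ring lra.
Set Implicit Arguments. Unset Strict Implicit. Unset Printing Implicit Defensive.
Import Order.TTheory GRing.Theory Num.Theory.
Local Open Scope classical_set_scope.
Local Open Scope ring_scope.

Section Scale.
Context {R : realType} {du : measure_display} {U : measurableType du}.

Lemma scale_ge0_integral (n : {measure set U -> \bar R}) (D : set U)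
  (mD : measurable D) (g : U -> \bar R) (mg : measurable_fun D g)
  (g0 : forall x, D x -> (0 <= g x)%E) (c : R) (c0 : 0 <= c) :
  (c%:E * \int[n]_(x in D) g x = \int[mscale (NngNum c0) n]_(x in D) g x)%E.
Proof. by rewrite ge0_integral_mscale. Qed.

Lemma scale_integral (n1 n2 : {measure set U -> \bar R}) (D : set U)
  (mD : measurable D) (f : U -> R)
  (i1 : n1.-integrable D (EFin \o f)) (i2 : n2.-integrable D (EFin \o f))
  (c1 c2 : R) (c10 : 0 <= c1) (c20 : 0 <= c2)
  (h : forall A, measurable A -> A `<=` D -> (c1%:E * n1 A = c2%:E * n2 A)%E) :
  c1 * fine (\int[n1]_(x in D) (f x)%:E) = c2 * fine (\int[n2]_(x in D) (f x)%:E).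
Proof.
have f1 := integrable_fin_num mD i1.
have f2 := integrable_fin_num mD i2.
suff H : (c1%:E * \int[n1]_(x in D) (f x)%:E = c2%:E * \int[n2]_(x in D) (f x)%:E)%E.
  by have := congr1 fine H; rewrite !fineM.
have mf : measurable_fun D (EFin \o f) by case/integrableP: i1.
have p1 := integrable_funepos mD i1; have m1 := integrable_funeneg mD i1.
have p2 := integrable_funepos mD i2; have m2 := integrable_funeneg mD i2.
have E1 := integralE n1 D (EFin \o f).
have E2 := integralE n2 D (EFin \o f).
rewrite E1 E2.
have fa1 := integrable_fin_num mD p1; have fb1 := integrable_fin_num mD m1.
have fa2 := integrable_fin_num mD p2; have fb2 := integrable_fin_num mD m2.
move: fa1 fb1 fa2 fb2.
set a1 := (\int[n1]_(x in D) _ x)%E; set b1 := (\int[n1]_(x in D) _ x)%E.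
set a2 := (\int[n2]_(x in D) _ x)%E; set b2 := (\int[n2]_(x in D) _ x)%E.
move=> fa1 fb1 fa2 fb2.
rewrite (@muleBr _ c1%:E a1 b1) //; last exact: fin_num_adde_defr.
rewrite (@muleBr _ c2%:E a2 b2) //; last exact: fin_num_adde_defr.

have mp : measurable_fun D ((EFin \o f)^\+)%E by exact: measurable_funepos.
have mm : measurable_fun D ((EFin \o f)^\-)%E by exact: measurable_funeneg.
rewrite /a1 /a2 /b1 /b2.
have gp : forall x, D x -> (0 <= ((EFin \o f)^\+)%E x)%E by move=> x _; exact: funepos_ge0.
have gm : forall x, D x -> (0 <= ((EFin \o f)^\-)%E x)%E by move=> x _; exact: funeneg_ge0.
rewrite (scale_ge0_integral _ mD mp gp c10) (scale_ge0_integral _ mD mp gp c20).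
rewrite (scale_ge0_integral _ mD mm gm c10) (scale_ge0_integral _ mD mm gm c20).
by congr (_ - _)%E; apply: eq_measure_integral => A mA AD; rewrite /mscale /=; exact: h.
Qed.
End Scale.

Section Transfer.
Context {R : realType} {d : measure_display} {T : measurableType d}.
Variables (m : measure T R) (S : set T) (X : T -> R).
Hypotheses (mS : measurable S) (mX : measurable_fun setT X).

Definition phiS (x : T) : (R * bool)%type := (X x, x \in S).

Lemma mphiS : measurable_fun setT phiS.
Proof.
apply: measurable_fun_pair => //.
apply: (@measurable_fun_bool _ _ _ _ true).
have -> : [set: T] `&` (fun x => x \in S) @^-1` [set true] = S.
  by apply/seteqP; split => x /=; rewrite ?inE; [case => _ /set_mem | move=> xS; split => //; apply/mem_set].
exact: mS.
Qed.

Definition Dtrue : set (R * bool)%type := setT `*` [set true].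

Lemma mDtrue : measurable Dtrue.
Proof. by apply: measurableX. Qed.

Lemma preim_Dtrue : phiS @^-1` Dtrue = S.
Proof.
apply/seteqP; split => x /=.
  by case => _ /= /set_mem.
by move=> xS; split => //=; apply/mem_set.
Qed.

Lemma integral_transfer : m.-integrable S (EFin \o X) ->
  (\int[m]_(x in S) (X x)%:E = \int[pushforward m phiS]_(y in Dtrue) (y.1)%:E)%E.
Proof.
move=> iX.
rewrite (integral_pushforward mphiS) //.
- by rewrite preim_Dtrue.
- by apply/measurable_EFinP; exact: measurable_fst.
- by rewrite preim_Dtrue.
- exact: mDtrue.
Qed.

Lemma integrable_transfer : m.-integrable S (EFin \o X) ->
  (pushforward m phiS).-integrable Dtrue (fun y => (y.1)%:E).
Proof.
move=> iX; apply: (integrable_pushforward mphiS).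
- by apply/measurable_EFinP; exact: measurable_fst.
- by rewrite preim_Dtrue.
- exact: mDtrue.
Qed.

Lemma mslice (A : set (R * bool)%type) : measurable A -> measurable [set r | A (r, true)].
Proof.
move=> mA.
have : measurable_fun setT (fun r : R => (r, true)) by exact: measurable_fun_pair.
move=> /(_ measurableT A mA); by rewrite setTI.
Qed.

Lemma pushforward_sub (A : set (R * bool)%type) : A `<=` Dtrue ->
  pushforward m phiS A = m (S `&` X @^-1` [set r | A (r, true)]).
Proof.
move=> AD.
rewrite /pushforward; congr (m _); apply/seteqP; split => x /=.
  rewrite /phiS; case: (boolP (x \in S)) => [/set_mem xS|xS] h; first by split.
  by have [_ /=] := AD _ h.
by case=> /mem_set xS h; rewrite /phiS xS.
Qed.
End Transfer.

Lemma key_lemma {R : realType}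
  {d1 : measure_display} {T1 : measurableType d1} (m1 : measure T1 R)
  (S1 : set T1) (X1 : T1 -> R)
  {d2 : measure_display} {T2 : measurableType d2} (m2 : measure T2 R)
  (S2 : set T2) (X2 : T2 -> R)
  (mS1 : measurable S1) (mX1 : measurable_fun setT X1)
  (mS2 : measurable S2) (mX2 : measurable_fun setT X2)
  (i1 : m1.-integrable S1 (EFin \o X1)) (i2 : m2.-integrable S2 (EFin \o X2))
  (c1 c2 : R) (c10 : 0 <= c1) (c20 : 0 <= c2)
  (h : forall B : set R, measurable B ->
     (c1%:E * m1 (S1 `&` X1 @^-1` B) = c2%:E * m2 (S2 `&` X2 @^-1` B))%E) :
  c1 * Rintegral m1 S1 X1 = c2 * Rintegral m2 S2 X2.
Proof.
rewrite /Rintegral (integral_transfer mS1 mX1 i1) (integral_transfer mS2 mX2 i2).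
apply: (scale_integral mDtrue (integrable_transfer mS1 mX1 i1) (integrable_transfer mS2 mX2 i2) c10 c20).
- exact: mphiS.
- exact: mphiS.
move=> mp1 mp2 A mA AD.
rewrite /= !pushforward_sub //; exact: h (mslice mA).
Qed.


Section Gen.
Context {R : realType} {d : measure_display} {T : measurableType d}.
Variable P : probability T R.

Lemma prb_fin (A : set T) : measurable A -> P A = (prb P A)%:E.
Proof. by move=> mA; rewrite /prb fineK // fin_num_measure. Qed.

Lemma prb_ge0 (A : set T) : 0 <= prb P A.
Proof. by rewrite /prb fine_ge0 // measure_ge0. Qed.

Lemma prb_le (A B : set T) : measurable A -> measurable B -> A `<=` B -> prb P A <= prb P B.
Proof.
move=> mA mB AB; rewrite -lee_fin -(prb_fin mA) -(prb_fin mB).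
by apply: le_measure => //; rewrite inE.
Qed.

Lemma prbU (A B : set T) : measurable A -> measurable B -> A `&` B = set0 ->
  prb P (A `|` B) = prb P A + prb P B.
Proof.
move=> mA mB AB.
have : P (A `|` B) = (P A + P B)%E by exact: measureU.
by rewrite !prb_fin //; try exact: measurableU; move=> [].
Qed.

Lemma RintU (A B : set T) (f : T -> R) : measurable A -> measurable B ->
  A `&` B = set0 -> P.-integrable A (EFin \o f) -> P.-integrable B (EFin \o f) ->
  Rintegral P (A `|` B) f = Rintegral P A f + Rintegral P B f.
Proof.
move=> mA mB AB iA iB; rewrite /Rintegral integral_setU //.
- by rewrite fineD // integrable_fin_num.
- apply/measurable_funU => //; split.
  + by case/integrableP: iA.
  + by case/integrableP: iB.
- exact/disj_set2P.
Qed.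

Lemma integrableU (A B : set T) (f : T -> \bar R) : measurable A -> measurable B ->
  A `&` B = set0 -> P.-integrable A f -> P.-integrable B f -> P.-integrable (A `|` B) f.
Proof.
move=> mA mB AB /integrableP[mfA iA] /integrableP[mfB iB].
have mfU : measurable_fun (A `|` B) f by apply/measurable_funU.
apply/integrableP; split => //.
rewrite ge0_integral_setU //.
- exact: lte_add_pinfty.
- exact: measurableT_comp.
- by apply/disj_set2P.
Qed.
End Gen.

Definition Oset {T : Type} (Dd Z W : T -> bool) (dd z w : bool) : set T :=
  [set t | Dd t = dd /\ Z t = z /\ W t = w].

Ltac bsolve := repeat match goal with
  | |- _ -> _ => let h := fresh in move=> h
  | h : _ /\ _ |- _ => case: h => ? ?
  | h : _ \/ _ |- _ => case: h => ?
  | h : true = false |- _ => discriminate h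
  | h : false = true |- _ => discriminate h
  | |- _ /\ _ => split
  end; try done; try (by left; bsolve); try (by right; bsolve).


Definition qzw {R : realType} {dsp : measure_display} {T : measurableType dsp}
  (P : probability T R) (Z W : T -> bool) z w := prb P (ev Z z `&` ev W w).

Section Struct.
Context {R : realType} {dsp : measure_display} {T : measurableType dsp}.
Variables (P : probability T R) (D : bool -> T -> bool) (Y : bool -> bool -> T -> R)
  (Z W : T -> bool) (rho1 rho0 : R).
Hypothesis H : hte_assumptions P D Y Z W rho1 rho0.

Let mY : forall d z, measurable_fun setT (Y d z).
Proof. by case: H. Qed.
Let mDz : forall z b, measurable (ev (D z) b).
Proof. by case: H => _ []. Qed.
Let mZ : forall b, measurable (ev Z b).
Proof. by case: H => _ [_ []]. Qed.
Let mW : forall b, measurable (ev W b).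
Proof. by case: H => _ [_ [_ []]]. Qed.
Let iY : forall d z, P.-integrable setT (fun w => (Y d z w)%:E).
Proof. by case: H => _ [_ [_ [_ []]]]. Qed.
Let rAT : forall d, rhoG P Y (ATs D) d = (if d then rho1 else rho0).
Proof. by case: H => _ [_ [_ [_ [_ []]]]]. Qed.
Let rNT : forall d, rhoG P Y (NTs D) d = (if d then rho1 else rho0).
Proof. by case: H => _ [_ [_ [_ [_ [_ []]]]]]. Qed.
Let rCP : forall d, rhoG P Y (CPs D) d = (if d then rho1 else rho0).
Proof. by case: H => _ [_ [_ [_ [_ [_ [_ []]]]]]]. Qed.
Let mono : forall w, D false w ==> D true w.
Proof. by case: H => _ [_ [_ [_ [_ [_ [_ [_ []]]]]]]]. Qed.
Let indA : forall d z (B : set R), measurable B -> forall z' w' c1 c0,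
     prb P (ev Z z' `&` ev W w' `&` (Y d z @^-1` B) `&` typ D c1 c0)
       * prb P (typ D c1 c0)
     = prb P (ev Z z' `&` ev W w' `&` typ D c1 c0)
       * prb P ((Y d z @^-1` B) `&` typ D c1 c0).
Proof. by case: H => _ [_ [_ [_ [_ [_ [_ [_ [_ []]]]]]]]]. Qed.
Let indB : forall z c1 c0 w',
     prb P (ev Z z `&` typ D c1 c0 `&` ev W w') * prb P (ev W w')
     = prb P (ev Z z `&` ev W w') * prb P (typ D c1 c0 `&` ev W w').
Proof. by case: H => _ [_ [_ [_ [_ [_ [_ [_ [_ [_ []]]]]]]]]]. Qed.
Let pCP : 0 < prb P (CPs D).
Proof. by case: H => _ [_ [_ [_ [_ [_ [_ [_ [_ [_ [_ []]]]]]]]]]]. Qed.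
Let pZW : forall z w', 0 < prb P (ev Z z `&` ev W w') < 1.
Proof. by case: H => _ [_ [_ [_ [_ [_ [_ [_ [_ [_ [_ [_ []]]]]]]]]]]]. Qed.
Let v1 : prW P W (ATs D) true * prW P W (CPs D) false != prW P W (ATs D) false * prW P W (CPs D) true.
Proof. by case: H => _ [_ [_ [_ [_ [_ [_ [_ [_ [_ [_ [_ [_ [h _]]]]]]]]]]]]]. Qed.
Let v2 : prW P W (NTs D) true * prW P W (CPs D) false != prW P W (NTs D) false * prW P W (CPs D) true.
Proof. by case: H => _ [_ [_ [_ [_ [_ [_ [_ [_ [_ [_ [_ [_ [_ h]]]]]]]]]]]]]. Qed.

Let mtyp c1 c0 : measurable (typ D c1 c0).
Proof. by change (measurable (ev (D true) c1 `&` ev (D false) c0)); apply: measurableI. Qed.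
Let mZW z w : measurable (ev Z z `&` ev W w).
Proof. by apply: measurableI. Qed.
Let mZWt z w c1 c0 : measurable (ev Z z `&` ev W w `&` typ D c1 c0).
Proof. by apply: measurableI. Qed.

Lemma q_gt0 z w : 0 < qzw P Z W z w.
Proof. by case/andP: (pZW z w). Qed.

Lemma pW_gt0 w : 0 < prb P (ev W w).
Proof.
apply: (lt_le_trans (q_gt0 true w)); apply: prb_le => //; exact: subIsetr.
Qed.


Lemma ATsE : ATs D = typ D true true. Proof. by []. Qed.
Lemma NTsE : NTs D = typ D false false. Proof. by []. Qed.
Lemma CPsE : CPs D = typ D true false. Proof. by []. Qed.

Lemma cellP z w c1 c0 : prb P (ev Z z `&` ev W w `&` typ D c1 c0) =
  qzw P Z W z w * prW P W (typ D c1 c0) w.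
Proof.
have := indB z c1 c0 w; rewrite setIAC => h.
have pw := pW_gt0 w.
rewrite /prW /qzw; apply: (mulIf (lt0r_neq0 pw)); rewrite h.
by field; exact: lt0r_neq0.
Qed.

Lemma typ_pos c1 c0 : prW P W (typ D c1 c0) true * prW P W (CPs D) false !=
  prW P W (typ D c1 c0) false * prW P W (CPs D) true -> 0 < prb P (typ D c1 c0).
Proof.
move=> v; rewrite lt0r prb_ge0 andbT; apply/negP => /eqP h0.
have hW w : prb P (typ D c1 c0 `&` ev W w) = 0.
  apply/eqP; rewrite eq_le prb_ge0 andbT -h0.
  apply: (prb_le P); [apply: measurableI; [exact: mtyp | exact: mW] | exact: mtyp | exact: subIsetl].
by move: v; rewrite /prW !hW !mul0r eqxx.
Qed.

Lemma pAT : 0 < prb P (typ D true true).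
Proof. exact: typ_pos. Qed.
Lemma pNT : 0 < prb P (typ D false false).
Proof. exact: typ_pos. Qed.
Lemma pCP' : 0 < prb P (typ D true false).
Proof. exact: pCP. Qed.

Let mYB dd zz (B : set R) : measurable B -> measurable (Y dd zz @^-1` B).
Proof. by move=> mB; have := mY dd zz measurableT mB; rewrite setTI. Qed.

Let iYS dd zz (S : set T) : measurable S -> P.-integrable S (EFin \o Y dd zz).
Proof. by move=> mS; apply: (integrableS measurableT mS) => //; exact: iY. Qed.

Lemma cell z w c1 c0 dd zz : 0 < prb P (typ D c1 c0) ->
  Rintegral P (ev Z z `&` ev W w `&` typ D c1 c0) (Y dd zz) =
  qzw P Z W z w * prW P W (typ D c1 c0) w * cexp P (typ D c1 c0) (Y dd zz).
Proof.
move=> pt.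
have k := @key_lemma R _ _ P (ev Z z `&` ev W w `&` typ D c1 c0) (Y dd zz)
  _ _ P (typ D c1 c0) (Y dd zz) (mZWt z w c1 c0) (mY dd zz) (mtyp c1 c0) (mY dd zz)
  (iYS dd zz (mZWt z w c1 c0)) (iYS dd zz (mtyp c1 c0))
  (prb P (typ D c1 c0)) (prb P (ev Z z `&` ev W w `&` typ D c1 c0))
  (prb_ge0 _ _) (prb_ge0 _ _).
rewrite -cellP /cexp; apply: (mulfI (lt0r_neq0 pt)); rewrite k.
  by field; exact: lt0r_neq0.
move=> B mB.
suff E : ((prb P (typ D c1 c0))%:E * P (ev Z z `&` ev W w `&` typ D c1 c0 `&` Y dd zz @^-1` B) =
  (prb P (ev Z z `&` ev W w `&` typ D c1 c0))%:E * P (typ D c1 c0 `&` Y dd zz @^-1` B))%E.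
  exact: E.
rewrite (prb_fin P (measurableI _ _ (mZWt z w c1 c0) (mYB dd zz mB))).
rewrite (prb_fin P (measurableI _ _ (mtyp c1 c0) (mYB dd zz mB))).
rewrite -!EFinM; congr EFin.
have -> : ev Z z `&` ev W w `&` typ D c1 c0 `&` Y dd zz @^-1` B =
  ev Z z `&` ev W w `&` Y dd zz @^-1` B `&` typ D c1 c0 by rewrite setIAC.
have -> : typ D c1 c0 `&` Y dd zz @^-1` B = Y dd zz @^-1` B `&` typ D c1 c0 by rewrite setIC.
by rewrite mulrC indA.
Qed.

Lemma diffG c1 c0 dd :
  cexp P (typ D c1 c0) (Y dd true) - cexp P (typ D c1 c0) (Y dd false) =
  rhoG P Y (typ D c1 c0) dd.
Proof.
rewrite /rhoG /cexp RintegralB ?mulrBl //.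
- exact: iYS.
- exact: iYS.
Qed.


Ltac setsolve := apply/seteqP; split; let t := fresh "t" in intro t; rewrite /=; rewrite /Oset /Dobs /ev /typ /set0 /=;
  move: (mono t); case: (D true t); case: (D false t); case: (Z t); case: (W t); bsolve.

Local Notation OS := (Oset (Dobs D Z) Z W).

Lemma O_AT w : OS true false w = ev Z false `&` ev W w `&` typ D true true.
Proof. by case: w; setsolve. Qed.
Lemma O_NT w : OS false true w = ev Z true `&` ev W w `&` typ D false false.
Proof. by case: w; setsolve. Qed.
Lemma O_tt w : OS true true w =
  (ev Z true `&` ev W w `&` typ D true true) `|` (ev Z true `&` ev W w `&` typ D true false).
Proof. by case: w; setsolve. Qed.
Lemma O_ff w : OS false false w =
  (ev Z false `&` ev W w `&` typ D false false) `|` (ev Z false `&` ev W w `&` typ D true false).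
Proof. by case: w; setsolve. Qed.
Lemma ZW_O z w : ev Z z `&` ev W w = OS true z w `|` OS false z w.
Proof. by case: z; case: w; setsolve. Qed.
Lemma CP_dec : typ D true false =
  ((ev Z true `&` ev W true `&` typ D true false) `|` (ev Z true `&` ev W false `&` typ D true false)) `|`
  ((ev Z false `&` ev W true `&` typ D true false) `|` (ev Z false `&` ev W false `&` typ D true false)).
Proof. by setsolve. Qed.

Lemma disj_tt w : (ev Z true `&` ev W w `&` typ D true true) `&` (ev Z true `&` ev W w `&` typ D true false) = set0.
Proof. by case: w; setsolve. Qed.
Lemma disj_ff w : (ev Z false `&` ev W w `&` typ D false false) `&` (ev Z false `&` ev W w `&` typ D true false) = set0.
Proof. by case: w; setsolve. Qed.
Lemma disj_O z w : OS true z w `&` OS false z w = set0.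
Proof. by case: z; case: w; setsolve. Qed.
Lemma disj_CP1 z : (ev Z z `&` ev W true `&` typ D true false) `&` (ev Z z `&` ev W false `&` typ D true false) = set0.
Proof. by case: z; setsolve. Qed.
Lemma disj_CP2 : ((ev Z true `&` ev W true `&` typ D true false) `|` (ev Z true `&` ev W false `&` typ D true false)) `&`
  ((ev Z false `&` ev W true `&` typ D true false) `|` (ev Z false `&` ev W false `&` typ D true false)) = set0.
Proof. by setsolve. Qed.

Lemma mO dd z w : measurable (OS dd z w).
Proof.
case: dd; case: z.
- by rewrite O_tt; apply: measurableU.
- by rewrite O_AT.
- by rewrite O_NT.
- by rewrite O_ff; apply: measurableU.
Qed.

Lemma Yobs_eq dd z w : Rintegral P (OS dd z w) (Yobs D Y Z) = Rintegral P (OS dd z w) (Y dd z).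
Proof.
apply: eq_Rintegral => t /set_mem [h1 [h2 _]].
by rewrite /Yobs /Ypot h1 h2.
Qed.

Lemma q_sum z w : qzw P Z W z w = prb P (OS true z w) + prb P (OS false z w).
Proof. by rewrite /qzw ZW_O prbU //; [exact: mO | exact: mO | exact: disj_O]. Qed.

Lemma PO_tf w : prb P (OS true false w) = qzw P Z W false w * prW P W (typ D true true) w.
Proof. by rewrite O_AT cellP. Qed.
Lemma PO_tt w : prb P (OS true true w) =
  qzw P Z W true w * prW P W (typ D true true) w + qzw P Z W true w * prW P W (typ D true false) w.
Proof. by rewrite O_tt prbU // ?cellP //; exact: disj_tt. Qed.

Lemma RO_tf w : Rintegral P (OS true false w) (Yobs D Y Z) =
  qzw P Z W false w * prW P W (typ D true true) w * cexp P (typ D true true) (Y true false).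
Proof. by rewrite Yobs_eq O_AT cell //; exact: pAT. Qed.
Lemma RO_ft w : Rintegral P (OS false true w) (Yobs D Y Z) =
  qzw P Z W true w * prW P W (typ D false false) w * cexp P (typ D false false) (Y false true).
Proof. by rewrite Yobs_eq O_NT cell //; exact: pNT. Qed.
Lemma RO_tt w : Rintegral P (OS true true w) (Yobs D Y Z) =
  qzw P Z W true w * prW P W (typ D true true) w * cexp P (typ D true true) (Y true true) +
  qzw P Z W true w * prW P W (typ D true false) w * cexp P (typ D true false) (Y true true).
Proof.
rewrite Yobs_eq O_tt RintU //; first by rewrite !cell //; exact: pAT.
- exact: disj_tt.
- exact: iYS.
- exact: iYS.
Qed.
Lemma RO_ff w : Rintegral P (OS false false w) (Yobs D Y Z) =
  qzw P Z W false w * prW P W (typ D false false) w * cexp P (typ D false false) (Y false false) +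
  qzw P Z W false w * prW P W (typ D true false) w * cexp P (typ D true false) (Y false false).
Proof.
rewrite Yobs_eq O_ff RintU //; first by rewrite !cell //; exact: pNT.
- exact: disj_ff.
- exact: iYS.
- exact: iYS.
Qed.


Lemma piece z w : Rintegral P (ev Z z `&` ev W w `&` typ D true false)
    (fun t => Ypot Y Z true t - Ypot Y Z false t) =
  qzw P Z W z w * prW P W (typ D true false) w *
    (cexp P (typ D true false) (Y true z) - cexp P (typ D true false) (Y false z)).
Proof.
have -> : Rintegral P (ev Z z `&` ev W w `&` typ D true false)
    (fun t => Ypot Y Z true t - Ypot Y Z false t) =
  Rintegral P (ev Z z `&` ev W w `&` typ D true false) (fun t => Y true z t - Y false z t).
  by apply: eq_Rintegral => t /set_mem [[hz _] _]; rewrite /Ypot hz.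
rewrite RintegralB //; [|exact: iYS|exact: iYS].
by rewrite !cell // mulrBr.
Qed.

Lemma ipiece z w : P.-integrable (ev Z z `&` ev W w `&` typ D true false)
    (EFin \o (fun t => Ypot Y Z true t - Ypot Y Z false t)).
Proof.
apply: (eq_integrable (mZWt z w true false) (fun t => (Y true z t)%:E - (Y false z t)%:E)%E).
  by move=> t /set_mem [[hz _] _]; rewrite /Ypot /= hz EFinB.
by apply: integrableB => //; exact: iYS.
Qed.

Lemma LATE_eq : LATE P D Y Z =
  (qzw P Z W true true * prW P W (typ D true false) true *
    (cexp P (typ D true false) (Y true true) - cexp P (typ D true false) (Y false true)) +
   qzw P Z W true false * prW P W (typ D true false) false *
    (cexp P (typ D true false) (Y true true) - cexp P (typ D true false) (Y false true)) +
  (qzw P Z W false true * prW P W (typ D true false) true *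
    (cexp P (typ D true false) (Y true false) - cexp P (typ D true false) (Y false false)) +
   qzw P Z W false false * prW P W (typ D true false) false *
    (cexp P (typ D true false) (Y true false) - cexp P (typ D true false) (Y false false)))) /
  (qzw P Z W true true * prW P W (typ D true false) true +
   qzw P Z W true false * prW P W (typ D true false) false +
  (qzw P Z W false true * prW P W (typ D true false) true +
   qzw P Z W false false * prW P W (typ D true false) false)).
Proof.
have mU z : measurable ((ev Z z `&` ev W true `&` typ D true false) `|`
                        (ev Z z `&` ev W false `&` typ D true false)).
  exact: measurableU.
have iU z : P.-integrable ((ev Z z `&` ev W true `&` typ D true false) `|`
                        (ev Z z `&` ev W false `&` typ D true false))
    (EFin \o (fun t => Ypot Y Z true t - Ypot Y Z false t)).
  by apply: integrableU => //; [exact: disj_CP1 | exact: ipiece | exact: ipiece].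
have eR : Rintegral P (typ D true false) (fun t => Ypot Y Z true t - Ypot Y Z false t) =
  Rintegral P (ev Z true `&` ev W true `&` typ D true false) (fun t => Ypot Y Z true t - Ypot Y Z false t) +
  Rintegral P (ev Z true `&` ev W false `&` typ D true false) (fun t => Ypot Y Z true t - Ypot Y Z false t) +
  (Rintegral P (ev Z false `&` ev W true `&` typ D true false) (fun t => Ypot Y Z true t - Ypot Y Z false t) +
  Rintegral P (ev Z false `&` ev W false `&` typ D true false) (fun t => Ypot Y Z true t - Ypot Y Z false t)).
  rewrite {1}CP_dec RintU //; [|exact: disj_CP2].
  by rewrite !RintU //; try exact: ipiece; try exact: disj_CP1.
have eP : prb P (typ D true false) =
  prb P (ev Z true `&` ev W true `&` typ D true false) +
  prb P (ev Z true `&` ev W false `&` typ D true false) +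
  (prb P (ev Z false `&` ev W true `&` typ D true false) +
  prb P (ev Z false `&` ev W false `&` typ D true false)).
  rewrite {1}CP_dec prbU //; [|exact: disj_CP2].
  by rewrite !prbU //; exact: disj_CP1.
rewrite /LATE CPsE {1}/cexp eR eP !piece !cellP.
by [].
Qed.


Lemma intY dd zz (S : set T) : measurable S -> P.-integrable S (EFin \o Y dd zz).
Proof. exact: iYS. Qed.
Lemma measY dd zz : measurable_fun setT (Y dd zz).
Proof. exact: mY. Qed.

Lemma PO_ft w : prb P (OS false true w) = qzw P Z W true w * prW P W (typ D false false) w.
Proof. by rewrite O_NT cellP. Qed.

Let qn0 z w : qzw P Z W z w != 0.
Proof. exact: lt0r_neq0 (q_gt0 z w). Qed.

Lemma a_id w : prW P W (typ D true true) w = prb P (OS true false w) / qzw P Z W false w.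
Proof. by rewrite PO_tf; field. Qed.
Lemma n_id w : prW P W (typ D false false) w = prb P (OS false true w) / qzw P Z W true w.
Proof. by rewrite PO_ft; field. Qed.
Lemma c_id w : prW P W (typ D true false) w =
  prb P (OS true true w) / qzw P Z W true w - prW P W (typ D true true) w.
Proof. by rewrite PO_tt; field. Qed.

Lemma sys1 w : prW P W (typ D true true) w * rho1 +
    prW P W (typ D true false) w * cexp P (typ D true false) (Y true true) =
  Rintegral P (OS true true w) (Yobs D Y Z) / qzw P Z W true w -
  Rintegral P (OS true false w) (Yobs D Y Z) / qzw P Z W false w.
Proof.
rewrite RO_tt RO_tf.
have e := diffG true true true; rewrite (rAT true : rhoG P Y (typ D true true) true = rho1) in e.
have -> : cexp P (typ D true true) (Y true true) = cexp P (typ D true true) (Y true false) + rho1.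
  by rewrite -e; ring.
by field; rewrite !qn0.
Qed.

Lemma sys0 w : - (prW P W (typ D false false) w * rho0) +
    prW P W (typ D true false) w * cexp P (typ D true false) (Y false false) =
  Rintegral P (OS false false w) (Yobs D Y Z) / qzw P Z W false w -
  Rintegral P (OS false true w) (Yobs D Y Z) / qzw P Z W true w.
Proof.
rewrite RO_ff RO_ft.
have e := diffG false false false; rewrite (rNT false : rhoG P Y (typ D false false) false = rho0) in e.
have -> : cexp P (typ D false false) (Y false true) = cexp P (typ D false false) (Y false false) + rho0.
  by rewrite -e; ring.
by field; rewrite !qn0.
Qed.

Lemma LATE_id : LATE P D Y Z =
  (qzw P Z W true true * prW P W (typ D true false) true *
    (cexp P (typ D true false) (Y true true) - (cexp P (typ D true false) (Y false false) + rho0)) +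
   qzw P Z W true false * prW P W (typ D true false) false *
    (cexp P (typ D true false) (Y true true) - (cexp P (typ D true false) (Y false false) + rho0)) +
  (qzw P Z W false true * prW P W (typ D true false) true *
    ((cexp P (typ D true false) (Y true true) - rho1) - cexp P (typ D true false) (Y false false)) +
   qzw P Z W false false * prW P W (typ D true false) false *
    ((cexp P (typ D true false) (Y true true) - rho1) - cexp P (typ D true false) (Y false false)))) /
  (qzw P Z W true true * prW P W (typ D true false) true +
   qzw P Z W true false * prW P W (typ D true false) false +
  (qzw P Z W false true * prW P W (typ D true false) true +
   qzw P Z W false false * prW P W (typ D true false) false)).
Proof.
rewrite LATE_eq.
have e1 := diffG true false true; rewrite (rCP true : rhoG P Y (typ D true false) true = rho1) in e1.
have e0 := diffG true false false; rewrite (rCP false : rhoG P Y (typ D true false) false = rho0) in e0.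
have -> : cexp P (typ D true false) (Y false true) = cexp P (typ D true false) (Y false false) + rho0.
  by rewrite -e0; ring.
have -> : cexp P (typ D true false) (Y true false) = cexp P (typ D true false) (Y true true) - rho1.
  by rewrite -e1; ring.
by [].
Qed.

Lemma v1' : prW P W (typ D true true) true * prW P W (typ D true false) false !=
  prW P W (typ D true true) false * prW P W (typ D true false) true.
Proof. exact: v1. Qed.
Lemma v2' : prW P W (typ D false false) true * prW P W (typ D true false) false !=
  prW P W (typ D false false) false * prW P W (typ D true false) true.
Proof. exact: v2. Qed.

End Struct.

Lemma alg2 (R : realFieldType) (a1 a0 c1 c0 r r' x x' : R) : a1 * c0 != a0 * c1 ->
  a1 * r + c1 * x = a1 * r' + c1 * x' -> a0 * r + c0 * x = a0 * r' + c0 * x' ->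
  r = r' /\ x = x'.
Proof.
move=> det e1 e0.
have h1 : (a1 * c0 - a0 * c1) * (r - r') =
  c0 * ((a1 * r + c1 * x) - (a1 * r' + c1 * x')) - c1 * ((a0 * r + c0 * x) - (a0 * r' + c0 * x')).
  by ring.
have h2 : (a1 * c0 - a0 * c1) * (x - x') =
  a1 * ((a0 * r + c0 * x) - (a0 * r' + c0 * x')) - a0 * ((a1 * r + c1 * x) - (a1 * r' + c1 * x')).
  by ring.
rewrite e1 e0 !subrr !mulr0 subrr in h1 h2.
have d0 : a1 * c0 - a0 * c1 != 0 by rewrite subr_eq0.
move/eqP: h1; rewrite mulf_eq0 (negbTE d0) /= subr_eq0 => /eqP ->.
move/eqP: h2; rewrite mulf_eq0 (negbTE d0) /= subr_eq0 => /eqP ->.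
by [].
Qed.

Lemma Oset_T {R : realType} {d : measure_display} {T : measurableType d}
  (D : bool -> T -> bool) (Y : bool -> bool -> T -> R) (Z W : T -> bool) dd z w :
  [set t | setT (Yobs D Y Z t) /\ Dobs D Z t = dd /\ Z t = z /\ W t = w] =
  Oset (Dobs D Z) Z W dd z w.
Proof. by apply/seteqP; split => t /=; [case | move=> h; split]. Qed.

Lemma Oset_Y {R : realType} {d : measure_display} {T : measurableType d}
  (D : bool -> T -> bool) (Y : bool -> bool -> T -> R) (Z W : T -> bool) dd z w (B : set R) :
  Oset (Dobs D Z) Z W dd z w `&` Y dd z @^-1` B =
  [set t | B (Yobs D Y Z t) /\ Dobs D Z t = dd /\ Z t = z /\ W t = w].
Proof.
apply/seteqP; split => t /=.
  by case=> -[hD [hZ hW]] hB; rewrite /Yobs /Ypot hD hZ.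
by case=> hB [hD [hZ hW]]; move: hB; rewrite /Yobs /Ypot hD hZ.
Qed.

Theorem theorem1 (R : realType)
  (d1 : measure_display) (T1 : measurableType d1) (P1 : probability T1 R)
  (Y1 : bool -> bool -> T1 -> R) (D1 : bool -> T1 -> bool) (Z1 W1 : T1 -> bool)
  (rho11 rho10 : R)
  (d2 : measure_display) (T2 : measurableType d2) (P2 : probability T2 R)
  (Y2 : bool -> bool -> T2 -> R) (D2 : bool -> T2 -> bool) (Z2 W2 : T2 -> bool)
  (rho21 rho20 : R) :
  hte_assumptions P1 D1 Y1 Z1 W1 rho11 rho10 ->
  hte_assumptions P2 D2 Y2 Z2 W2 rho21 rho20 ->
  same_obs_law P1 (Yobs D1 Y1 Z1) (Dobs D1 Z1) Z1 W1
               P2 (Yobs D2 Y2 Z2) (Dobs D2 Z2) Z2 W2 ->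
  rho11 = rho21 /\ rho10 = rho20 /\
  LATE P1 D1 Y1 Z1 = LATE P2 D2 Y2 Z2.
Proof.
move=> H1 H2 HO.
have cP dd z w : prb P1 (Oset (Dobs D1 Z1) Z1 W1 dd z w) = prb P2 (Oset (Dobs D2 Z2) Z2 W2 dd z w).
  have := HO setT measurableT dd z w.
  by rewrite (Oset_T D1 Y1) (Oset_T D2 Y2) /prb => ->.
have cR dd z w : Rintegral P1 (Oset (Dobs D1 Z1) Z1 W1 dd z w) (Yobs D1 Y1 Z1) =
    Rintegral P2 (Oset (Dobs D2 Z2) Z2 W2 dd z w) (Yobs D2 Y2 Z2).
  rewrite (Yobs_eq P1 D1 Y1 Z1 W1) (Yobs_eq P2 D2 Y2 Z2 W2).
  have := @key_lemma R _ _ P1 (Oset (Dobs D1 Z1) Z1 W1 dd z w) (Y1 dd z)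
    _ _ P2 (Oset (Dobs D2 Z2) Z2 W2 dd z w) (Y2 dd z)
    (mO H1 dd z w) (measY H1 dd z) (mO H2 dd z w) (measY H2 dd z)
    (intY H1 dd z (mO H1 dd z w)) (intY H2 dd z (mO H2 dd z w)) 1 1 ler01 ler01.
  rewrite !mul1r; apply => B mB.
  rewrite !mul1e (Oset_Y D1 Y1) (Oset_Y D2 Y2).
  exact: HO.
have eq_q z w : qzw P1 Z1 W1 z w = qzw P2 Z2 W2 z w.
  by rewrite (q_sum H1) (q_sum H2) !cP.
have ea w : prW P1 W1 (typ D1 true true) w = prW P2 W2 (typ D2 true true) w.
  by rewrite (a_id H1) (a_id H2) cP eq_q.
have en w : prW P1 W1 (typ D1 false false) w = prW P2 W2 (typ D2 false false) w.
  by rewrite (n_id H1) (n_id H2) cP eq_q.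
have ec w : prW P1 W1 (typ D1 true false) w = prW P2 W2 (typ D2 true false) w.
  by rewrite (c_id H1) (c_id H2) cP eq_q ea.
have [r1 x1] : rho11 = rho21 /\
    cexp P1 (typ D1 true false) (Y1 true true) = cexp P2 (typ D2 true false) (Y2 true true).
  apply: (alg2 (v1' H2)).
  - by rewrite (sys1 H2) -ea -ec (sys1 H1) !cR !eq_q.
  - by rewrite (sys1 H2) -ea -ec (sys1 H1) !cR !eq_q.
have [r0 x0] : rho10 = rho20 /\
    cexp P1 (typ D1 true false) (Y1 false false) = cexp P2 (typ D2 true false) (Y2 false false).
  have det : - prW P2 W2 (typ D2 false false) true * prW P2 W2 (typ D2 true false) false !=
      - prW P2 W2 (typ D2 false false) false * prW P2 W2 (typ D2 true false) true.
    by rewrite !mulNr eqr_opp; exact: (v2' H2).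
  apply: (alg2 det).
  - by rewrite !mulNr (sys0 H2) -en -ec (sys0 H1) !cR !eq_q.
  - by rewrite !mulNr (sys0 H2) -en -ec (sys0 H1) !cR !eq_q.
split => //; split => //.
by rewrite (LATE_id H1) (LATE_id H2) !eq_q !ec r1 r0 x1 x0.
Qed.
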